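(* Let $\bm{L}\in\mathbb{R}^{m\times n}$ have rank $r$ and compact SVD $\bm{L}=\bm{W}_{\bm{L}}\bm{\Sigma}_{\bm{L}}\bm{V}_{\bm{L}}^T$, and suppose $\bm{L}$ is $\{\mu_1(\bm{L}),\mu_2(\bm{L})\}$-incoherent, i.e. \[\max_{i}\|\bm{W}_{\bm{L}}^T\bm{e}_i\|_2\leq\sqrt{\tfrac{\mu_1(\bm{L}) r}{m}}\quad\text{and}\quad\max_{i}\|\bm{V}_{\bm{L}}^T\bm{e}_i\|_2\leq\sqrt{\tfrac{\mu_2(\bm{L}) r}{n}}.\] Let $J\subseteq[n]$ be such that $\bm{C}=\bm{L}(:,J)\in\mathbb{R}^{m\times|J|}$ has rank $r$, let $\bm{C}=\bm{W}_{\bm{C}}\bm{\Sigma}_{\bm{C}}\bm{V}_{\bm{C}}^T$ be its compact SVD, and set $\beta:=\sqrt{\frac{|J|}{n}}\,\|\bm{V}_{\bm{L}}(J,:)^\dagger\|_2$. Then \begin{enumerate} \item $\max_i\|\bm{W}_{\bm{C}}^T\bm{e}_i\|_2\leq\sqrt{\frac{\mu_1(\bm{L}) r}{m}}$, \item $\max_i\|\bm{V}_{\bm{C}}^T\bm{e}_i\|_2\leq\beta\,\kappa(\bm{L})\sqrt{\frac{\mu_2(\bm{L}) r}{|J|}}$, \item $\kappa(\bm{C})\leq\beta\sqrt{\mu_2(\bm{L}) r}\,\kappa(\bm{L})$. \end{enumerate} In particular, $\bm{C}$ satisfies the incoherence inequalities with parameters $\mu_1(\bm{C})\leq\mu_1(\bm{L})$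 and $\mu_2(\bm{C})\leq\beta^2\kappa(\bm{L})^2\mu_2(\bm{L})$ (where for $\bm{C}$ the dimensions $m,n$ in the incoherence inequalities are replaced by $m,|J|$).
   Context: $[n]=\{1,\dots,n\}$. For a matrix $\bm{A}$, $\bm{A}(I,J)$ denotes the submatrix with row indices $I$ and column indices $J$ ('':'' meaning all indices), $\bm{A}^\dagger$ is the Moore–Penrose pseudoinverse, and $\kappa(\bm{A})=\|\bm{A}\|_2\|\bm{A}^\dagger\|_2=\sigma_{\max}(\bm{A})/\sigma_{\min}(\bm{A})$, with $\sigma_{\min}$ the smallest nonzero singular value. $\bm{e}_i$ is the $i$-th canonical basis vector of the appropriate dimension. A rank-$r$ matrix $\bm{A}\in\mathbb{R}^{p\times q}$ with compact SVD $\bm{W}_{\bm{A}}\bm{\Sigma}_{\bm{A}}\bm{V}_{\bm{A}}^T$ is called $\{\mu_1,\mu_2\}$-incoherent if $\max_i\|\bm{W}_{\bm{A}}^T\bm{e}_i\|_2\le\sqrt{\mu_1 r/p}$ and $\max_i\|\bm{V}_{\bm{A}}^T\bm{e}_i\|_2\le\sqrt{\mu_2 r/q}$. *)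

(* Defs.v *)
From HB Require Import structures.
From mathcomp Require Import all_boot all_order all_algebra.
From mathcomp Require Import boolp classical_sets reals.
Set Implicit Arguments. Unset Strict Implicit. Unset Printing Implicit Defensive.
Import Order.TTheory GRing.Theory Num.Theory.
Local Open Scope ring_scope.
Local Open Scope classical_set_scope.

Section LinAlg.
Variable R : realType.

Definition enorm (k : nat) (x : 'cV[R]_k) : R :=
  Num.sqrt (\sum_(i < k) x i 0 ^+ 2).

Definition unitvec (k : nat) (i : 'I_k) : 'cV[R]_k := delta_mx i 0.

Definition opnorm (p q : nat) (A : 'M[R]_(p, q)) : R :=
  sup [set enorm (A *m x) | x in [set x : 'cV[R]_q | enorm x <= 1]].

Definition is_pinv (p q : nat) (A : 'M[R]_(p, q)) (X : 'M[R]_(q, p)) : Prop :=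
  [/\ A *m X *m A = A, X *m A *m X = X,
      (A *m X)^T = A *m X & (X *m A)^T = X *m A].

Definition pinv (p q : nat) (A : 'M[R]_(p, q)) : 'M[R]_(q, p) :=
  xget 0 [set X | is_pinv A X].

Definition kappa (p q : nat) (A : 'M[R]_(p, q)) : R :=
  opnorm A * opnorm (pinv A).

Definition is_compact_svd (p q r : nat) (A : 'M[R]_(p, q))
  (W : 'M[R]_(p, r)) (s : 'rV[R]_r) (V : 'M[R]_(q, r)) : Prop :=
  [/\ W^T *m W = 1%:M, V^T *m V = 1%:M,
      (forall i : 'I_r, 0 < s 0 i),
      (forall i j : 'I_r, (i <= j)%N -> s 0 j <= s 0 i)
    & A = W *m diag_mx s *m V^T].

Definition incoherent_svd (p q r : nat) (W : 'M[R]_(p, r)) (V : 'M[R]_(q, r))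
  (mu1 mu2 : R) : Prop :=
  (forall i : 'I_p, enorm (W^T *m unitvec i) <= Num.sqrt (mu1 * r%:R / p%:R)) /\
  (forall i : 'I_q, enorm (V^T *m unitvec i) <= Num.sqrt (mu2 * r%:R / q%:R)).

Definition incoherent (p q r : nat) (A : 'M[R]_(p, q)) (mu1 mu2 : R) : Prop :=
  \rank A = r /\
  forall W s V, @is_compact_svd p q r A W s V -> incoherent_svd W V mu1 mu2.

Definition colsubset (p q : nat) (A : 'M[R]_(p, q)) (J : {set 'I_q})
  : 'M[R]_(p, #|J|) := colsub (fun k : 'I_#|J| => enum_val k) A.
Definition rowsubset (p q : nat) (A : 'M[R]_(p, q)) (J : {set 'I_p})
  : 'M[R]_(#|J|, q) := rowsub (fun k : 'I_#|J| => enum_val k) A.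

End LinAlg.
Arguments unitvec {R k}.

(* Main.v *)
Require Import Defs.
From HB Require Import structures.
From mathcomp Require Import all_boot all_order all_algebra.
From mathcomp Require Import boolp classical_sets reals.
From mathcomp Require Import ring lra.
Import Order.TTheory GRing.Theory Num.Theory.
Local Open Scope ring_scope.
Local Open Scope classical_set_scope.

Definition sq {R : realType} {k} (x : 'cV[R]_k) : R := \sum_(i < k) x i 0 ^+ 2.

Lemma sqE {R : realType} {k} (x : 'cV[R]_k) : sq x = (x^T *m x) 0 0.
Proof. rewrite /sq mxE; apply: eq_bigr => i _; by rewrite !mxE expr2. Qed.

Lemma sq_ge0 {R : realType} {k} (x : 'cV[R]_k) : 0 <= sq x.
Proof. by apply: sumr_ge0 => i _; rewrite sqr_ge0. Qed.

Lemma enorm_ge0 {R : realType} {k} (x : 'cV[R]_k) : 0 <= enorm x.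
Proof. exact: sqrtr_ge0. Qed.

Lemma enorm_sq {R : realType} {k} (x : 'cV[R]_k) : enorm x ^+ 2 = sq x.
Proof. by rewrite /enorm sqr_sqrtr // sq_ge0. Qed.

Lemma enormE {R : realType} {k} (x : 'cV[R]_k) : enorm x = Num.sqrt (sq x).
Proof. by []. Qed.

Lemma enorm_le_sq {R : realType} {k l} (x : 'cV[R]_k) (y : 'cV[R]_l) (c : R) :
  0 <= c -> sq x <= c ^+ 2 * sq y -> enorm x <= c * enorm y.
Proof.
move=> c0 h; rewrite /enorm -[c](ger0_norm c0) -sqrtr_sqr -sqrtrM ?sqr_ge0 //.
by rewrite ler_sqrt // mulr_ge0 ?sqr_ge0 ?sq_ge0.
Qed.

Lemma sq_le_enorm {R : realType} {k l} (x : 'cV[R]_k) (y : 'cV[R]_l) (c : R) :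
  0 <= c -> enorm x <= c * enorm y -> sq x <= c ^+ 2 * sq y.
Proof.
move=> c0 h; by rewrite -!enorm_sq -exprMn ler_sqr // nnegrE ?enorm_ge0 ?mulr_ge0 ?enorm_ge0.
Qed.

Lemma enorm_iso {R : realType} {k l} (U : 'M[R]_(k, l)) (x : 'cV[R]_l) :
  U^T *m U = 1%:M -> enorm (U *m x) = enorm x.
Proof.
move=> hU; rewrite !enormE !sqE trmx_mul -mulmxA (mulmxA U^T) hU mul1mx //.
Qed.

Lemma sq_trmx_ge0 {R : realType} {k l} (A : 'M[R]_(k, l)) (x : 'cV[R]_l) :
  0 <= ((A *m x)^T *m (A *m x)) 0 0.
Proof. by rewrite -sqE sq_ge0. Qed.

Lemma enorm_contr {R : realType} {k l} (U : 'M[R]_(k, l)) (v : 'cV[R]_k) :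
  U^T *m U = 1%:M -> enorm (U^T *m v) <= enorm v.
Proof.
move=> hU; rewrite -[enorm v]mul1r; apply: enorm_le_sq => //.
rewrite expr1n mul1r !sqE trmx_mul trmxK.
set P := U *m U^T.
have hP : (1%:M - P)^T *m (1%:M - P) = 1%:M - P.
  have tP : P^T = P by rewrite /P trmx_mul trmxK.
  have -> : (1%:M - P)^T = 1%:M - P.
    apply/matrixP => i j; rewrite !mxE eq_sym; congr (_ - _); by apply: eq_bigr => t _; rewrite !mxE mulrC.
  rewrite mulmxBl !mulmxBr !mul1mx mulmx1.
  by rewrite /P mulmxA -(mulmxA U) hU mulmx1 subrr subr0.
have := sq_trmx_ge0 (1%:M - P) v.
rewrite trmx_mul mulmxA -(mulmxA _ _ (1%:M - P)) hP.
have E : forall (A B : 'M[R]_1), (A - B) 0 0 = A 0 0 - B 0 0.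
  by move=> A B; rewrite !mxE.
by rewrite mulmxBr mulmx1 mulmxBl E /P !mulmxA subr_ge0.
Qed.

Lemma enorm_ge_sq {R : realType} {k l} (x : 'cV[R]_k) (y : 'cV[R]_l) (c : R) :
  0 <= c -> c ^+ 2 * sq y <= sq x -> c * enorm y <= enorm x.
Proof.
move=> c0 h; rewrite /enorm -[c](ger0_norm c0) -sqrtr_sqr -sqrtrM ?sqr_ge0 //.
by rewrite ler_sqrt // sq_ge0.
Qed.

Lemma sq_diag {R : realType} {k} (s : 'rV[R]_k) (z : 'cV[R]_k) :
  sq (diag_mx s *m z) = \sum_i s 0 i ^+ 2 * z i 0 ^+ 2.
Proof. by apply: eq_bigr => i _; rewrite mul_diag_mx mxE exprMn. Qed.

Lemma enorm_diag_le {R : realType} {k} (s : 'rV[R]_k) (z : 'cV[R]_k) c :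
  0 <= c -> (forall i, `|s 0 i| <= c) -> enorm (diag_mx s *m z) <= c * enorm z.
Proof.
move=> c0 hs; apply: enorm_le_sq => //; rewrite sq_diag /sq mulr_sumr.
apply: ler_sum => i _; apply: ler_wpM2r; first exact: sqr_ge0.
by rewrite -real_normK ?num_real // ler_sqr ?nnegrE ?normr_ge0.
Qed.

Lemma enorm_diag_ge {R : realType} {k} (s : 'rV[R]_k) (z : 'cV[R]_k) c :
  0 <= c -> (forall i, c <= s 0 i) -> c * enorm z <= enorm (diag_mx s *m z).
Proof.
move=> c0 hs; apply: enorm_ge_sq => //; rewrite sq_diag /sq mulr_sumr.
apply: ler_sum => i _; apply: ler_wpM2r; first exact: sqr_ge0.
by rewrite ler_sqr ?nnegrE // (le_trans c0).
Qed.

Lemma CS {R : realType} {k} (a b : 'I_k -> R) :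
  (\sum_i a i * b i) ^+ 2 <= (\sum_i a i ^+ 2) * (\sum_i b i ^+ 2).
Proof.
set A := \sum_i a i ^+ 2; set B := \sum_i b i ^+ 2; set C := \sum_i a i * b i.
have B0 : 0 <= B by apply: sumr_ge0 => i _; exact: sqr_ge0.
have E : \sum_i (B * a i - C * b i) ^+ 2 = B * (A * B - C ^+ 2).
  have -> : \sum_i (B * a i - C * b i) ^+ 2 =
     \sum_i (B ^+ 2 * a i ^+ 2 + (C ^+ 2 * b i ^+ 2 - 2 * B * C * (a i * b i))).
    by apply: eq_bigr => i _; ring.
  rewrite big_split big_split /= sumrN -!mulr_sumr -/A -/B -/C; ring.
have H : 0 <= B * (A * B - C ^+ 2).
  by rewrite -E; apply: sumr_ge0 => i _; exact: sqr_ge0.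
case: (ltrgtP B 0) => hB.
- by move: (lt_le_trans hB B0); rewrite ltxx.
- by move: H; rewrite pmulr_rge0 // subr_ge0.
- have hb : forall i, b i = 0.
    move=> i; apply/eqP; rewrite -sqrf_eq0; apply/eqP.
    by apply: (psumr_eq0P (P := predT) (F := fun i => b i ^+ 2)) => // j _; exact: sqr_ge0.
  have -> : C = 0 by rewrite /C big1 // => i _; rewrite hb mulr0.
  by rewrite expr0n /= mulr_ge0 // /A sumr_ge0 // => i _; exact: sqr_ge0.
Qed.

Definition frob {R : realType} {k l} (A : 'M[R]_(k, l)) : R := \sum_i \sum_j A i j ^+ 2.

Lemma frob_ge0 {R : realType} {k l} (A : 'M[R]_(k, l)) : 0 <= frob A.
Proof. by apply: sumr_ge0 => i _; apply: sumr_ge0 => j _; exact: sqr_ge0. Qed.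

Lemma sq_frob {R : realType} {k l} (A : 'M[R]_(k, l)) (x : 'cV[R]_l) :
  sq (A *m x) <= frob A * sq x.
Proof.
rewrite /sq /frob mulr_suml; apply: ler_sum => i _; rewrite mxE.
exact: (CS (fun j => A i j) (fun j => x j 0)).
Qed.

Lemma enorm_frob {R : realType} {k l} (A : 'M[R]_(k, l)) (x : 'cV[R]_l) :
  enorm (A *m x) <= Num.sqrt (frob A) * enorm x.
Proof.
apply: enorm_le_sq; first exact: sqrtr_ge0.
by rewrite sqr_sqrtr ?frob_ge0 // sq_frob.
Qed.

Lemma enormZ {R : realType} {k} (a : R) (x : 'cV[R]_k) :
  enorm (a *: x) = `|a| * enorm x.
Proof.
rewrite !enormE -sqrtr_sqr -sqrtrM ?sqr_ge0 //; congr Num.sqrt.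
by rewrite /sq mulr_sumr; apply: eq_bigr => i _; rewrite mxE exprMn.
Qed.

Lemma enorm_eq0 {R : realType} {k} (x : 'cV[R]_k) : enorm x = 0 -> x = 0.
Proof.
move=> h; have : sq x = 0 by rewrite -enorm_sq h expr0n.
move=> hs; apply/matrixP => i j; rewrite (ord1 j) mxE; apply/eqP; rewrite -sqrf_eq0; apply/eqP.
by apply: (psumr_eq0P (P := predT) (F := fun i => x i 0 ^+ 2)) => // t _; exact: sqr_ge0.
Qed.

Definition opset {R : realType} {p q} (A : 'M[R]_(p, q)) :=
  [set enorm (A *m x) | x in [set x : 'cV[R]_q | enorm x <= 1]].

Lemma opset_ub {R : realType} {p q} (A : 'M[R]_(p, q)) : has_ubound (opset A).
Proof.
exists (Num.sqrt (frob A)); rewrite /opset => _ [x /= hx <-].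
apply: le_trans (enorm_frob A x) _.
by rewrite -[X in _ <= X]mulr1 ler_wpM2l ?sqrtr_ge0.
Qed.

Lemma enorm0 {R : realType} {k} : enorm (0 : 'cV[R]_k) = 0.
Proof. by rewrite /enorm big1 ?sqrtr0 // => i _; rewrite mxE expr0n. Qed.

Lemma opset0 {R : realType} {p q} (A : 'M[R]_(p, q)) : opset A 0.
Proof. by exists 0; rewrite /= ?enorm0 ?ler01 // mulmx0 enorm0. Qed.

Lemma opset_n0 {R : realType} {p q} (A : 'M[R]_(p, q)) : (opset A !=set0)%classic.
Proof. by exists 0; exact: opset0. Qed.

Lemma opnorm_ge0 {R : realType} {p q} (A : 'M[R]_(p, q)) : 0 <= opnorm A.
Proof. exact: (sup_upper_bound (conj (opset_n0 A) (opset_ub A)) (opset0 A)). Qed.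

Lemma opnorm_ub {R : realType} {p q} (A : 'M[R]_(p, q)) (x : 'cV[R]_q) :
  enorm (A *m x) <= opnorm A * enorm x.
Proof.
have [h0|hn] := eqVneq (enorm x) 0.
  by rewrite (enorm_eq0 x h0) mulmx0 !enorm0 mulr0.
have hp : 0 < enorm x by rewrite lt_def hn enorm_ge0.
set y := (enorm x)^-1 *: x.
have hy : enorm y <= 1 by rewrite /y enormZ ger0_norm ?invr_ge0 ?enorm_ge0 // mulVf.
have : enorm (A *m y) <= opnorm A.
  apply: (sup_upper_bound (conj (opset_n0 A) (opset_ub A))).
  by exists y.
rewrite /y -scalemxAr enormZ ger0_norm ?invr_ge0 ?enorm_ge0 //.
by rewrite ler_pdivrMl // mulrC.
Qed.

Lemma opnorm_le {R : realType} {p q} (A : 'M[R]_(p, q)) c :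
  0 <= c -> (forall x, enorm (A *m x) <= c * enorm x) -> opnorm A <= c.
Proof.
move=> c0 h; apply: ge_sup; first exact: opset_n0.
move=> _ [x /= hx <-]; apply: le_trans (h x) _.
by rewrite -[X in _ <= X]mulr1 ler_wpM2l.
Qed.

Definition dinv {R : realType} {k} (s : 'rV[R]_k) : 'rV[R]_k := \row_i (s 0 i)^-1.

Lemma diag_dinv {R : realType} {k} (s : 'rV[R]_k) :
  (forall i, 0 < s 0 i) ->
  diag_mx s *m diag_mx (dinv s) = 1%:M /\ diag_mx (dinv s) *m diag_mx s = 1%:M.
Proof.
move=> hs; rewrite !mulmx_diag -!diag_const_mx; split; congr diag_mx;
  by apply/matrixP => i j; rewrite !mxE ?mulfV ?mulVf // gt_eqF.
Qed.

Lemma pinv_half {R : realType} {p q} {A : 'M[R]_(p, q)} {X Y} :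
  is_pinv A X -> is_pinv A Y -> X = X *m A *m Y.
Proof.
move=> [hAXA hXAX hAX hXA] [hAYA hYAY hAY hYA].
have s2 : A^T = A^T *m (A *m Y) by rewrite -hAY -trmx_mul hAYA.
rewrite -{1}hXAX -mulmxA -hAX trmx_mul s2.
by rewrite (mulmxA X^T) -trmx_mul hAX !mulmxA hXAX.
Qed.

Lemma is_pinv_tr {R : realType} {p q} {A : 'M[R]_(p, q)} {X} :
  is_pinv A X -> is_pinv A^T X^T.
Proof.
move=> [hAXA hXAX hAX hXA]; split.
- by rewrite -!trmx_mul mulmxA hAXA.
- by rewrite -!trmx_mul mulmxA hXAX.
- by rewrite -trmx_mul hXA.
- by rewrite -trmx_mul hAX.
Qed.

Lemma pinv_uniq {R : realType} {p q} {A : 'M[R]_(p, q)} {X Y} :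
  is_pinv A X -> is_pinv A Y -> X = Y.
Proof.
move=> hX hY; rewrite (pinv_half hX hY).
have := pinv_half (is_pinv_tr hY) (is_pinv_tr hX).
rewrite -!trmx_mul => /(congr1 trmx); rewrite !trmxK mulmxA => <-.
by [].
Qed.

Lemma pinvE {R : realType} {p q} {A : 'M[R]_(p, q)} {X} :
  is_pinv A X -> pinv A = X.
Proof.
move=> hX; apply: xget_unique => // Y hY; exact: pinv_uniq hY hX.
Qed.

Lemma is_pinv_fact {R : realType} {p q k} (A : 'M[R]_(p, q))
  (U : 'M[R]_(p, k)) (D E : 'M[R]_k) (V : 'M[R]_(q, k)) :
  U^T *m U = 1%:M -> V^T *m V = 1%:M -> D *m E = 1%:M -> E *m D = 1%:M ->
  A = U *m D *m V^T -> is_pinv A (V *m E *m U^T).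
Proof.
move=> hU hV hDE hED ->.
have hAX : U *m D *m V^T *m (V *m E *m U^T) = U *m U^T.
  by rewrite !mulmxA -(mulmxA _ V^T V) hV mulmx1 -(mulmxA _ D E) hDE mulmx1.
have hXA : V *m E *m U^T *m (U *m D *m V^T) = V *m V^T.
  by rewrite !mulmxA -(mulmxA _ U^T U) hU mulmx1 -(mulmxA _ E D) hED mulmx1.
split.
- by rewrite hAX !mulmxA -(mulmxA U U^T U) hU mulmx1.
- by rewrite hXA !mulmxA -(mulmxA V V^T V) hV mulmx1.
- by rewrite hAX trmx_mul trmxK.
- by rewrite hXA trmx_mul trmxK.
Qed.

Lemma sq_delta {R : realType} {k} (i : 'I_k) : sq (delta_mx i 0 : 'cV[R]_k) = 1.
Proof.
rewrite /sq (bigD1 i) //= big1 ?addr0 => [|j hj]; first by rewrite mxE !eqxx expr1n.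
by rewrite mxE (negbTE hj) expr0n.
Qed.

Lemma enorm_delta {R : realType} {k} (i : 'I_k) : enorm (delta_mx i 0 : 'cV[R]_k) = 1.
Proof. by rewrite enormE sq_delta sqrtr1. Qed.

Lemma diag_delta {R : realType} {k} (s : 'rV[R]_k) (i : 'I_k) :
  diag_mx s *m (delta_mx i 0 : 'cV[R]_k) = s 0 i *: (delta_mx i 0 : 'cV[R]_k).
Proof.
apply/matrixP => a b; rewrite mul_diag_mx !mxE (ord1 b) eqxx andbT.
by case: eqP => [->|_]; rewrite ?mulr1 ?mulr0.
Qed.

Lemma sq_trdelta {R : realType} {p q} (A : 'M[R]_(p, q)) (j : 'I_p) :
  sq (A^T *m (delta_mx j 0 : 'cV[R]_p)) = \sum_k A j k ^+ 2.
Proof. by rewrite -colE; apply: eq_bigr => k _; rewrite !mxE. Qed.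

Lemma kappa_ge0 {R : realType} {p q} (A : 'M[R]_(p, q)) : 0 <= kappa A.
Proof. by rewrite /kappa mulr_ge0 ?opnorm_ge0. Qed.

Lemma enorm_rowsub_e {R : realType} {n k} (V : 'M[R]_(n, k)) (J : {set 'I_n})
  (i : 'I_#|J|) :
  enorm ((rowsubset V J)^T *m unitvec i) = enorm (V^T *m unitvec (enum_val i)).
Proof.
rewrite !enormE /unitvec !sq_trdelta; congr Num.sqrt.
by apply: eq_bigr => t _; rewrite /rowsubset mxE.
Qed.

Lemma arithA1 {R : realType} (a b c : R) : 0 <= a -> 0 <= a / c ->
  Num.sqrt a * Num.sqrt (b / c) = Num.sqrt (a / c) * Num.sqrt b.
Proof. by move=> a0 ac0; rewrite -!sqrtrM //; congr Num.sqrt; ring. Qed.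

Lemma arithA2 {R : realType} (a b c : R) : a != 0 -> 0 <= a / c ->
  Num.sqrt (a / c) * Num.sqrt (b / a) = Num.sqrt (b / c).
Proof. move=> a0 ac0; rewrite -!sqrtrM //; congr Num.sqrt.
transitivity (b / c * (a / a)); first by ring.
by rewrite mulfV // mulr1. Qed.

Lemma arithA3 {R : realType} (x k mu rr a : R) : 0 <= x -> 0 <= k ->
  Num.sqrt (x ^+ 2 * k ^+ 2 * mu * rr / a) = x * k * Num.sqrt (mu * rr / a).
Proof.
move=> x0 k0.
rewrite (_ : x ^+ 2 * k ^+ 2 * mu * rr / a = (x * k) ^+ 2 * (mu * rr / a)); last by ring.
by rewrite sqrtrM ?sqr_ge0 // sqrtr_sqr ger0_norm // mulr_ge0.
Qed.

Lemma main_r {R : realType} (m n r : nat) (L : 'M[R]_(m, n))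
  (WL : 'M[R]_(m, r.+1)) (sL : 'rV[R]_r.+1) (VL : 'M[R]_(n, r.+1)) (mu1 mu2 : R)
  (J : {set 'I_n})
  (WC : 'M[R]_(m, r.+1)) (sC : 'rV[R]_r.+1) (VC : 'M[R]_(#|J|, r.+1)) :
  is_compact_svd L WL sL VL ->
  incoherent_svd WL VL mu1 mu2 ->
  is_compact_svd (colsubset L J) WC sC VC ->
  let beta := Num.sqrt (#|J|%:R / n%:R) * opnorm (pinv (rowsubset VL J)) in
  [/\ (forall i : 'I_m,
         enorm (WC^T *m unitvec i) <= Num.sqrt (mu1 * r.+1%:R / m%:R)),
      (forall i : 'I_#|J|,
         enorm (VC^T *m unitvec i)
           <= beta * kappa L * Num.sqrt (mu2 * r.+1%:R / #|J|%:R))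
    & kappa (colsubset L J) <= beta * Num.sqrt (mu2 * r.+1%:R) * kappa L].
Proof.
move=> [hWL hVL sLpos sLord hL] [inc1 inc2] [hWC hVC sCpos _ hCs] beta.
set C := colsubset L J in hCs *.
set VJ := rowsubset VL J in beta *.
set SL := diag_mx sL in hL *; set SC := diag_mx sC in hCs *.
have [hSL1 hSL2] := diag_dinv _ sLpos; have [hSC1 hSC2] := diag_dinv _ sCpos.
set SLi := diag_mx (dinv sL) in hSL1 hSL2 *.
set SCi := diag_mx (dinv sC) in hSC1 hSC2 *.
set smax := sL 0 ord0; set smin := sL 0 ord_max.
have sminpos : 0 < smin by apply: sLpos.
have smaxpos : 0 < smax by apply: sLpos.
have smaxge : forall i, `|sL 0 i| <= smax.
  by move=> i; rewrite ger0_norm ?(ltW (sLpos i)) //; apply: sLord.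
have sminle : forall i, smin <= sL 0 i.
  by move=> i; apply: sLord; rewrite -ltnS.
have hC : C = WL *m SL *m VJ^T.
  by rewrite /C /colsubset hL /VJ /rowsubset trmx_mxsub -mulmx_colsub.
have hCV : C *m VC = WC *m SC by rewrite hCs -mulmxA hVC mulmx1.
have hWCe : WC = C *m VC *m SCi by rewrite hCV -mulmxA hSC1 mulmx1.
have hPC : WL *m WL^T *m C = C.
  by rewrite hC !mulmxA -(mulmxA WL WL^T WL) hWL mulmx1.
have hPW : WL *m WL^T *m WC = WC.
  by rewrite {1}hWCe !mulmxA hPC -hWCe.
set M := WL^T *m WC.
have hMM : M^T *m M = 1%:M.
  by rewrite /M trmx_mul trmxK -mulmxA (mulmxA WL) hPW hWC.
have hMM' : M *m M^T = 1%:M by apply: mulmx1C.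
have hg : VJ *m SL *m M = VC *m SC.
  have e1 : C^T *m WC = VJ *m SL *m M.
    by rewrite hC !trmx_mul trmxK tr_diag_mx /M !mulmxA.
  have e2 : C^T *m WC = VC *m SC.
    by rewrite hCs !trmx_mul trmxK tr_diag_mx -!mulmxA hWC mulmx1.
  by rewrite -e1 e2.
have hh : SC *m VC^T = M^T *m SL *m VJ^T.
  have e1 : WC^T *m C = SC *m VC^T by rewrite hCs !mulmxA hWC mul1mx.
  have e2 : WC^T *m C = M^T *m SL *m VJ^T by rewrite hC /M trmx_mul trmxK !mulmxA.
  by rewrite -e1 e2.
clearbody M.
set X := SL *m M *m SCi *m VC^T.
have hVJ : VJ = VC *m (SC *m M^T *m SLi).
  rewrite !mulmxA -hg -(mulmxA _ M M^T) hMM' mulmx1.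
  by rewrite -mulmxA hSL1 mulmx1.
have hpX : is_pinv VJ X.
  have -> : X = 1%:M *m (SL *m M *m SCi) *m VC^T by rewrite mul1mx.
  apply: (is_pinv_fact _ VC (SC *m M^T *m SLi) (SL *m M *m SCi) 1%:M) => //.
  - by rewrite trmx1 mulmx1.
  - rewrite !mulmxA -(mulmxA (SC *m M^T) SLi SL) hSL2 mulmx1.
    by rewrite -(mulmxA SC M^T M) hMM mulmx1 hSC1.
  - rewrite !mulmxA -(mulmxA (SL *m M) SCi SC) hSC2 mulmx1.
    by rewrite -(mulmxA SL M M^T) hMM' mulmx1 hSL1.
  - by rewrite trmx1 mulmx1.
have hXVJ : X *m VJ = 1%:M.
  rewrite hVJ /X !mulmxA -(mulmxA _ VC^T VC) hVC mulmx1.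
  rewrite -(mulmxA (SL *m M) SCi SC) hSC2 mulmx1.
  by rewrite -(mulmxA SL M M^T) hMM' mulmx1 hSL1.
have hpinvVJ : pinv VJ = X := pinvE hpX.
have hbeta : beta = Num.sqrt (#|J|%:R / n%:R) * opnorm X by rewrite /beta hpinvVJ.
clearbody beta.
have key : forall z : 'cV_(r.+1), smin * enorm z <= opnorm X * enorm (SC *m z).
  move=> z; set y := SL *m (M *m z).
  have e1 : VJ *m y = VC *m (SC *m z) by rewrite /y !mulmxA hg.
  have e2 : y = X *m (VJ *m y) by rewrite mulmxA hXVJ mul1mx.
  have h1 : enorm y <= opnorm X * enorm (SC *m z).
    by rewrite {1}e2 -(enorm_iso VC (SC *m z) hVC) -e1; apply: opnorm_ub.
  apply: le_trans h1; rewrite -(enorm_iso M z hMM).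
  exact: enorm_diag_ge (ltW sminpos) sminle.
have hoL : smax <= opnorm L.
  set e0 := (delta_mx ord0 0 : 'cV[R]_(r.+1)).
  have e : L *m (VL *m e0) = WL *m (SL *m e0).
    by rewrite hL -!mulmxA (mulmxA VL^T) hVL mul1mx.
  have := opnorm_ub L (VL *m e0).
  rewrite e (enorm_iso WL) // (enorm_iso VL) // /SL diag_delta enormZ enorm_delta ger0_norm ?mulr1 //.
  exact: ltW.
have hpL : pinv L = VL *m SLi *m WL^T := pinvE (is_pinv_fact _ _ _ _ _ hWL hVL hSL1 hSL2 hL).
have hoY : smin^-1 <= opnorm (pinv L).
  set e0 := (delta_mx ord_max 0 : 'cV[R]_(r.+1)).
  have e : pinv L *m (WL *m e0) = VL *m (SLi *m e0).
    by rewrite hpL -!mulmxA (mulmxA WL^T) hWL mul1mx.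
  have := opnorm_ub (pinv L) (WL *m e0).
  rewrite e (enorm_iso VL) // (enorm_iso WL) // /SLi diag_delta enormZ enorm_delta ger0_norm ?mulr1 //.
    by rewrite mxE.
  by rewrite mxE invr_ge0 ltW.
have hkL : smax <= smin * kappa L.
  rewrite /kappa; apply: le_trans (_ : smin * (smax * smin^-1) <= _).
    by rewrite mulrCA mulfV ?gt_eqF // mulr1.
  rewrite ler_pM2l //; apply: ler_pM => //; [exact: ltW | by rewrite invr_ge0 ltW].
set a := Num.sqrt (mu2 * r.+1%:R / n%:R).
have a0 : 0 <= a := sqrtr_ge0 _.
split.
- move=> i.
  have -> : WC^T *m unitvec i = WC^T *m (WL *m (WL^T *m unitvec i)).
    by rewrite -{1}hPW !trmx_mul trmxK !mulmxA.
  apply: le_trans (enorm_contr WC _ hWC) _.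
  by rewrite (enorm_iso WL) //; apply: inc1.
- move=> i; set z := VC^T *m unitvec i.
  have ez : SC *m z = M^T *m (SL *m (VJ^T *m unitvec i)).
    by rewrite /z mulmxA hh !mulmxA.
  have hMT : M^T^T *m M^T = 1%:M by rewrite trmxK.
  have h1 : enorm (SC *m z) <= smax * a.
    rewrite ez (enorm_iso M^T) //.
    apply: le_trans (enorm_diag_le sL _ _ (ltW smaxpos) smaxge) _.
    by rewrite ler_wpM2l ?(ltW smaxpos) // enorm_rowsub_e; apply: inc2.
  have h2 := key z.
  have Jpos : (0 < #|J|)%N := leq_ltn_trans (leq0n i) (ltn_ord i).
  have eb : beta * Num.sqrt (mu2 * r.+1%:R / #|J|%:R) = opnorm X * a.
    rewrite hbeta mulrAC arithA2; [by rewrite mulrC | by rewrite pnatr_eq0 -lt0n | by rewrite divr_ge0 ?ler0n].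
  rewrite mulrAC eb -(ler_pM2l sminpos).
  apply: le_trans h2 _.
  apply: le_trans (ler_wpM2l (opnorm_ge0 X) h1) _.
  have -> : smin * (opnorm X * a * kappa L) = opnorm X * a * (smin * kappa L) by ring.
  have -> : opnorm X * (smax * a) = opnorm X * a * smax by ring.
  by apply: ler_wpM2l => //; rewrite mulr_ge0 ?opnorm_ge0.
- have hF : frob VJ^T <= #|J|%:R * a ^+ 2.
    rewrite /frob exchange_big /=.
    apply: le_trans (_ : \sum_(i < #|J|) a ^+ 2 <= _); last first.
      by rewrite sumr_const card_ord mulr_natl.
    apply: ler_sum => i _.
    have h := inc2 (enum_val i); rewrite -enorm_rowsub_e in h.
    have : sq (VJ^T *m unitvec i) <= a ^+ 2.
      by rewrite -enorm_sq ler_sqr ?nnegrE ?enorm_ge0.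
    rewrite /unitvec sq_trdelta.
    suff -> : \sum_(k < r.+1) VJ^T k i ^+ 2 = \sum_k VJ i k ^+ 2 by [].
    by apply: eq_bigr => k _; rewrite mxE.
  have hoC : opnorm C <= smax * (Num.sqrt #|J|%:R * a).
    apply: opnorm_le; first by rewrite !mulr_ge0 ?sqrtr_ge0 ?(ltW smaxpos).
    move=> x; rewrite hC -!mulmxA (enorm_iso WL) //.
    apply: le_trans (enorm_diag_le sL _ _ (ltW smaxpos) smaxge) _.
    rewrite -mulrA ler_wpM2l ?(ltW smaxpos) //.
    apply: le_trans (enorm_frob _ x) _.
    rewrite ler_wpM2r ?enorm_ge0 //.
    rewrite -[a in X in _ <= X](ger0_norm a0) -sqrtr_sqr -sqrtrM ?ler0n //.
    by rewrite ler_sqrt ?mulr_ge0 ?sqr_ge0 ?ler0n.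
  have hpC : pinv C = VC *m SCi *m WC^T :=
    pinvE (is_pinv_fact _ _ _ _ _ hWC hVC hSC1 hSC2 hCs).
  have hoZ : smin * opnorm (pinv C) <= opnorm X.
    have : opnorm (pinv C) <= opnorm X / smin.
      apply: opnorm_le; first by rewrite divr_ge0 ?opnorm_ge0 ?ltW.
      move=> y; rewrite hpC -!mulmxA (enorm_iso VC) //.
      set z := SCi *m (WC^T *m y).
      have ez : SC *m z = WC^T *m y by rewrite /z mulmxA hSC1 mul1mx.
      rewrite -(ler_pM2l sminpos).
      have -> : smin * (opnorm X / smin * enorm y) = opnorm X * enorm y * (smin / smin) by ring.
      rewrite mulfV ?gt_eqF // mulr1.
      apply: le_trans (key z) _; rewrite ez ler_wpM2l ?opnorm_ge0 //.
      exact: enorm_contr.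
    have si : 0 < smin^-1 by rewrite invr_gt0.
    move=> h; rewrite -(ler_pM2l si) mulrA mulVf ?gt_eqF // mul1r.
    by rewrite mulrC.
  set b := Num.sqrt #|J|%:R * a.
  have eb : beta * Num.sqrt (mu2 * r.+1%:R) = b * opnorm X.
    by rewrite hbeta /b /a arithA1 ?ler0n ?divr_ge0 ?ler0n //; ring.
  rewrite eb /kappa -(ler_pM2l sminpos).
  apply: le_trans (_ : opnorm C * opnorm X <= _).
    by rewrite mulrCA ler_wpM2l ?opnorm_ge0.
  apply: le_trans (ler_wpM2r (opnorm_ge0 X) hoC) _.
  have -> : smin * (b * opnorm X * (opnorm L * opnorm (pinv L))) =
    b * opnorm X * (smin * kappa L) by rewrite /kappa; ring.
  have -> : smax * b * opnorm X = b * opnorm X * smax by ring.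
  by apply: ler_wpM2l => //; rewrite mulr_ge0 ?opnorm_ge0 // /b mulr_ge0 ?sqrtr_ge0.
Qed.

Theorem theorem3p1 (R : realType) (m n r : nat) (L : 'M[R]_(m, n))
  (WL : 'M[R]_(m, r)) (sL : 'rV[R]_r) (VL : 'M[R]_(n, r)) (mu1 mu2 : R)
  (J : {set 'I_n})
  (WC : 'M[R]_(m, r)) (sC : 'rV[R]_r) (VC : 'M[R]_(#|J|, r)) :
  \rank L = r ->
  is_compact_svd L WL sL VL ->
  incoherent_svd WL VL mu1 mu2 ->
  \rank (colsubset L J) = r ->
  is_compact_svd (colsubset L J) WC sC VC ->
  let beta := Num.sqrt (#|J|%:R / n%:R) * opnorm (pinv (rowsubset VL J)) in
  [/\ (forall i : 'I_m,
         enorm (WC^T *m unitvec i) <= Num.sqrt (mu1 * r%:R / m%:R)),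
      (forall i : 'I_#|J|,
         enorm (VC^T *m unitvec i)
           <= beta * kappa L * Num.sqrt (mu2 * r%:R / #|J|%:R)),
      kappa (colsubset L J) <= beta * Num.sqrt (mu2 * r%:R) * kappa L
    & incoherent r (colsubset L J) mu1 (beta ^+ 2 * kappa L ^+ 2 * mu2)].
Proof.
case: r WL sL VL WC sC VC => [|r] WL sL VL WC sC VC hrL hL hinc hrC hC beta.
  have e0 : forall (x : 'cV[R]_0) (c : R), enorm x <= Num.sqrt c.
    by move=> x c; rewrite enormE /sq big_ord0 sqrtr0; apply: sqrtr_ge0.
  have b0 : 0 <= beta by rewrite /beta mulr_ge0 ?sqrtr_ge0 ?opnorm_ge0.
  split.
  - by move=> i; apply: e0.
  - move=> i; rewrite enormE /sq big_ord0 sqrtr0.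
    apply: mulr_ge0; [apply: mulr_ge0 => //; exact: kappa_ge0 | exact: sqrtr_ge0].
  - rewrite mulr0 sqrtr0 mulr0 mul0r.
    case: hC => _ _ _ _ hCs.
    have h : opnorm (colsubset L J) <= 0.
      apply: opnorm_le => // x.
      by rewrite hCs thinmx0 !mul0mx enorm0 mul0r.
    rewrite /kappa; apply: le_trans (ler_wpM2r (opnorm_ge0 _) h) _.
    by rewrite mul0r.
  - by split => // W s V _; split => i; apply: e0.
have [p1 p2 p3] := @main_r R m n r L WL sL VL mu1 mu2 J WC sC VC hL hinc hC.
have b0 : 0 <= beta by rewrite /beta mulr_ge0 ?sqrtr_ge0 ?opnorm_ge0.
split => //; split => // W s V hsvd.
have [q1 q2 _] := @main_r R m n r L WL sL VL mu1 mu2 J W s V hL hinc hsvd.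
split => // i; rewrite arithA3 ?kappa_ge0 //; exact: q2.
Qed.
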